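(* Let $\mathcal H$ and $\mathcal K$ be Hilbert spaces. If $D$ is an nc-domain and $f$ is an $\mathcal L(\mathcal H,\mathcal K)$-valued nc-function on $D$, then there exists a unique $\mathcal L(\mathcal H,\mathcal K)$-valued nc-function $f^\sim$ on the envelope $D^\sim$ such that $f^\sim|_D=f$.
   Context: $\mathcal M^d=\bigcup_n\mathcal M_n^d$. An nc-set is a subset of $\mathcal M^d$ closed under direct sums and unitary conjugation; an nc-domain is an nc-set with each level $D\cap\mathcal M_n^d$ open. A set $A$ is invariant if $S^{-1}(A\cap\mathcal M_n^d)S\subseteq A$ for every $n$ and every invertible $S\in\mathcal M_n$. The envelope $A^\sim$ of $A$ is the smallest invariant nc-set containing $A$. An $\mathcal L(\mathcal H,\mathcal K)$-valued nc-function on a set $D$ closed under direct sums is a map $f$ with $f(x)\in\mathcal L(\mathbb C^n\otimes\mathcal H,\mathbb C^n\otimes\mathcal K)$ for $x\in D\cap\mathcal M_n^d$, $f(x\oplus y)=f(x)\oplus f(y)$, and $f(s^{-1}xs)=(s^{-1}\otimes I_{\mathcal K})f(x)(s\otimes I_{\mathcal H})$ whenever $s$ is invertible and $x,s^{-1}xs\in D$. *)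

(* Defs.v *)
From HB Require Import structures.
From mathcomp Require Import all_boot all_order all_algebra.
From mathcomp Require Import complex.
From mathcomp Require Import reals.
Set Implicit Arguments. Unset Strict Implicit. Unset Printing Implicit Defensive.
Import Order.TTheory GRing.Theory Num.Theory.
Local Open Scope ring_scope.
Local Open Scope complex_scope.

Section NC.
Variable R : realType.
Local Notation C := (R[i]).

Definition ncpt (d n : nat) := 'I_d -> 'M[C]_n.

(* A subset of M^d = union_n M_n^d, given level by level. *)
Definition ncsubset (d : nat) := forall n : nat, ncpt d n -> Prop.

Definition dsum_pt d n m (x : ncpt d n) (y : ncpt d m) : ncpt d (n + m) :=
  fun k => block_mx (x k) 0 0 (y k).

Definition adjmx n (U : 'M[C]_n) : 'M[C]_n := (map_mx (fun z => z^*) U)^T.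

Definition unitary n (U : 'M[C]_n) : Prop :=
  U *m adjmx U = 1%:M /\ adjmx U *m U = 1%:M.

Definition simpt d n (s : 'M[C]_n) (x : ncpt d n) : ncpt d n :=
  fun k => invmx s *m x k *m s.

Definition closed_dsum d (A : ncsubset d) : Prop :=
  forall n m (x : ncpt d n) (y : ncpt d m), A n x -> A m y -> A (n + m)%N (dsum_pt x y).

Definition is_ncset d (A : ncsubset d) : Prop :=
  closed_dsum A /\
  forall n (U : 'M[C]_n) (x : ncpt d n), unitary U -> A n x ->
    A n (fun k => adjmx U *m x k *m U).

(* each level D cap M_n^d is open in M_n^d ~ C^(d n^2) (product topology,
   expressed with the max-modulus metric) *)
Definition level_open d (A : ncsubset d) : Prop :=
  forall n (x : ncpt d n), A n x ->
    exists eps : R, 0 < eps /\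
      forall y : ncpt d n,
        (forall k i j, `|y k i j - x k i j| < eps%:C) -> A n y.

Definition is_ncdomain d (A : ncsubset d) : Prop := is_ncset A /\ level_open A.

Definition invariant d (A : ncsubset d) : Prop :=
  forall n (S : 'M[C]_n) (x : ncpt d n), S \in unitmx -> A n x -> A n (simpt S x).

Definition envelope d (A : ncsubset d) : ncsubset d :=
  fun n x => forall B : ncsubset d, is_ncset B -> invariant B ->
     (forall m y, A m y -> B m y) -> B n x.

(* Hilbert spaces over C: a C-vector space with an inner product
   (linear in the first variable) complete for the induced norm. *)
Definition inner_product (H : lmodType C) (ip : H -> H -> C) : Prop :=
  [/\ forall (a : C) (x y z : H), ip (a *: x + y) z = a * ip x z + ip y z,
      forall x y, ip x y = (ip y x)^*,
      forall x, 0 <= ip x x &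
      forall x, ip x x = 0 -> x = 0].

Definition hnorm (H : lmodType C) (ip : H -> H -> C) (x : H) : C := sqrtC (ip x x).

Definition is_hilbert (H : lmodType C) (ip : H -> H -> C) : Prop :=
  inner_product ip /\
  forall u : nat -> H,
    (forall eps : C, 0 < eps -> exists N, forall p q, (N <= p)%N -> (N <= q)%N ->
        hnorm ip (u p - u q) < eps) ->
    exists l : H, forall eps : C, 0 < eps -> exists N, forall p, (N <= p)%N ->
        hnorm ip (u p - l) < eps.

(* C^n (x) H is modelled as H^n = 'I_n -> H with the direct-sum inner product. *)
Definition normsqn (H : lmodType C) (ip : H -> H -> C) n (v : 'I_n -> H) : C :=
  \sum_(i < n) ip (v i) (v i).

Definition bounded_op (H K : lmodType C) (ipH : H -> H -> C) (ipK : K -> K -> C)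
  n (T : ('I_n -> H) -> ('I_n -> K)) : Prop :=
  (forall (a : C) (v w : 'I_n -> H),
      T (fun i => a *: v i + w i) = (fun i => a *: T v i + T w i)) /\
  exists M : C, 0 <= M /\ forall v, normsqn ipK (T v) <= M * normsqn ipH v.

(* (A (x) I_V) acting on C^n (x) V *)
Definition mxact (V : lmodType C) n (A : 'M[C]_n) (v : 'I_n -> V) : 'I_n -> V :=
  fun i => \sum_(j < n) A i j *: v j.

(* T1 (+) T2 acting on C^(n+m) (x) H = (C^n (x) H) (+) (C^m (x) H) *)
Definition dsum_op (H K : lmodType C) n m (T1 : ('I_n -> H) -> ('I_n -> K))
  (T2 : ('I_m -> H) -> ('I_m -> K)) : ('I_(n + m) -> H) -> ('I_(n + m) -> K) :=
  fun v i => match split i with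
             | inl a => T1 (fun j => v (lshift m j)) a
             | inr b => T2 (fun j => v (rshift n j)) b
             end.

(* the (total) type of candidate L(H,K)-valued functions on M^d; only their
   values on the domain matter *)
Definition ncmap (H K : lmodType C) d :=
  forall n : nat, ncpt d n -> ('I_n -> H) -> ('I_n -> K).

Definition is_ncfun (H K : lmodType C) (ipH : H -> H -> C) (ipK : K -> K -> C)
  d (D : ncsubset d) (f : ncmap H K d) : Prop :=
  [/\ closed_dsum D,
      forall n (x : ncpt d n), D n x -> bounded_op ipH ipK (f n x),
      forall n m (x : ncpt d n) (y : ncpt d m), D n x -> D m y ->
        f (n + m)%N (dsum_pt x y) = dsum_op (f n x) (f m y) &
      forall n (s : 'M[C]_n) (x : ncpt d n), s \in unitmx -> D n x -> D n (simpt s x) ->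
        f n (simpt s x) = (fun v => mxact (invmx s) (f n x (mxact s v)))].

End NC.

Arguments envelope {R d} A n x.

(* Main.v *)
Require Import Defs.
From HB Require Import structures.
From mathcomp Require Import all_boot all_order all_algebra ring.
From mathcomp Require Import complex reals.
From Stdlib Require Import ClassicalEpsilon FunctionalExtensionality.
Set Implicit Arguments. Unset Strict Implicit. Unset Printing Implicit Defensive.
Import Order.TTheory GRing.Theory Num.Theory.
Local Open Scope ring_scope.
Section Aux.
Variable R : realType.
Local Notation C := (R[i]).

Lemma invmx_uniq n (X B : 'M[C]_n) : B \in unitmx -> X *m B = 1%:M -> invmx B = X.
Proof. by move=> Bu XB; rewrite -[X](mulmxK Bu) XB mul1mx. Qed.

Lemma invmxM n (A B : 'M[C]_n) : A \in unitmx -> B \in unitmx ->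
  invmx (A *m B) = invmx B *m invmx A.
Proof.
move=> Au Bu; apply: invmx_uniq; first by rewrite unitmx_mul Au Bu.
by rewrite mulmxA -(mulmxA (invmx B)) mulVmx // mulmx1 mulVmx.
Qed.

Lemma simpt1 d n (y : ncpt R d n) : simpt 1%:M y = y.
Proof. by apply: functional_extensionality => k; rewrite /simpt invmx1 mul1mx mulmx1. Qed.

Lemma simptM d n (s t : 'M[C]_n) (y : ncpt R d n) : s \in unitmx -> t \in unitmx ->
  simpt s (simpt t y) = simpt (t *m s) y.
Proof.
move=> su tu; apply: functional_extensionality => k.
by rewrite /simpt invmxM // !mulmxA.
Qed.

Lemma simptK d n (s : 'M[C]_n) (y : ncpt R d n) : s \in unitmx ->
  simpt (invmx s) (simpt s y) = y.
Proof.
move=> su; rewrite simptM ?unitmx_inv // mulmxV // simpt1 //.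
Qed.

Lemma dsum_simpt d n m (s1 : 'M[C]_n) (s2 : 'M[C]_m) (x : ncpt R d n) (y : ncpt R d m) :
  s1 \in unitmx -> s2 \in unitmx ->
  dsum_pt (simpt s1 x) (simpt s2 y) = simpt (block_mx s1 0 0 s2) (dsum_pt x y).
Proof.
move=> s1u s2u; apply: functional_extensionality => k.
rewrite /simpt /dsum_pt invmx_block_diag ?block_diag_mx_unit ?s1u //.
rewrite !mulmx_block !(mulmx0, mul0mx, addr0, add0r) //.
Qed.

Lemma unitary_inv n (U : 'M[C]_n) : unitary U -> invmx U = adjmx U /\ U \in unitmx.
Proof.
move=> [_ h]; have [_ Uu] := mulmx1_unit h; split => //; exact: invmx_uniq.
Qed.

Lemma mxactM (V : lmodType C) n (A B : 'M[C]_n) (v : 'I_n -> V) :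
  mxact A (mxact B v) = mxact (A *m B) v.
Proof.
apply: functional_extensionality => i; rewrite /mxact.
under eq_bigr => j _ do rewrite scaler_sumr.
rewrite exchange_big /=; apply: eq_bigr => k _.
rewrite !mxE scaler_suml; apply: eq_bigr => j _; by rewrite scalerA.
Qed.

Lemma mxact1 (V : lmodType C) n (v : 'I_n -> V) : mxact 1%:M v = v.
Proof.
apply: functional_extensionality => i; rewrite /mxact (bigD1 i) //= big1 ?addr0.
  by rewrite mxE eqxx scale1r.
by move=> j /negbTE ji; rewrite mxE eq_sym ji scale0r.
Qed.

Lemma mxact_lin (V : lmodType C) n (A : 'M[C]_n) a (v w : 'I_n -> V) :
  mxact A (fun i => a *: v i + w i) = (fun i => a *: mxact A v i + mxact A w i).
Proof.
apply: functional_extensionality => i; rewrite /mxact scaler_sumr -big_split /=.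
by apply: eq_bigr => j _; rewrite scalerDr !scalerA mulrC.
Qed.

Lemma split_l n m (j : 'I_n) : split (lshift m j) = inl j.
Proof. exact: (unsplitK (inl j)). Qed.
Lemma split_r n m (j : 'I_m) : split (rshift n j) = inr j.
Proof. exact: (unsplitK (inr j)). Qed.

Lemma mxact_blk (V : lmodType C) n m (A : 'M[C]_n) (B : 'M[C]_m) (v : 'I_(n + m) -> V) :
  mxact (block_mx A 0 0 B) v = fun i => match split i with
    | inl a => mxact A (fun j => v (lshift m j)) a
    | inr b => mxact B (fun j => v (rshift n j)) b end.
Proof.
apply: functional_extensionality => i; rewrite /mxact big_split_ord /=.
have := splitK i; case: (split i) => a /= <-.
  rewrite [X in _ + X]big1 ?addr0; last by move=> j _; rewrite block_mxEur mxE scale0r.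
  by apply: eq_bigr => j _; rewrite block_mxEul.
rewrite [X in X + _]big1 ?add0r; last by move=> j _; rewrite block_mxEdl mxE scale0r.
by apply: eq_bigr => j _; rewrite block_mxEdr.
Qed.

Definition conjop (V W : lmodType C) n (s : 'M[C]_n) (T : ('I_n -> V) -> ('I_n -> W)) :=
  fun v => mxact (invmx s) (T (mxact s v)).

Lemma conjop1 (V W : lmodType C) n (T : ('I_n -> V) -> ('I_n -> W)) : conjop 1%:M T = T.
Proof.
apply: functional_extensionality => v; by rewrite /conjop invmx1 !mxact1.
Qed.

Lemma conjopM (V W : lmodType C) n (s t : 'M[C]_n) (T : ('I_n -> V) -> ('I_n -> W)) :
  s \in unitmx -> t \in unitmx -> conjop s (conjop t T) = conjop (t *m s) T.
Proof.
move=> su tu; apply: functional_extensionality => v.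
by rewrite /conjop !mxactM invmxM.
Qed.

Lemma dsum_l (V W : lmodType C) n m (T1 : ('I_n -> V) -> ('I_n -> W))
  (T2 : ('I_m -> V) -> ('I_m -> W)) w :
  (fun j => dsum_op T1 T2 w (lshift m j)) = T1 (fun j => w (lshift m j)).
Proof. by apply: functional_extensionality => j; rewrite /dsum_op split_l. Qed.
Lemma dsum_r (V W : lmodType C) n m (T1 : ('I_n -> V) -> ('I_n -> W))
  (T2 : ('I_m -> V) -> ('I_m -> W)) w :
  (fun j => dsum_op T1 T2 w (rshift n j)) = T2 (fun j => w (rshift n j)).
Proof. by apply: functional_extensionality => j; rewrite /dsum_op split_r. Qed.
Lemma blk_l (V : lmodType C) n m (A : 'M[C]_n) (B : 'M[C]_m) (v : 'I_(n + m) -> V) :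
  (fun j => mxact (block_mx A 0 0 B) v (lshift m j)) = mxact A (fun j => v (lshift m j)).
Proof. by apply: functional_extensionality => j; rewrite mxact_blk split_l. Qed.
Lemma blk_r (V : lmodType C) n m (A : 'M[C]_n) (B : 'M[C]_m) (v : 'I_(n + m) -> V) :
  (fun j => mxact (block_mx A 0 0 B) v (rshift n j)) = mxact B (fun j => v (rshift n j)).
Proof. by apply: functional_extensionality => j; rewrite mxact_blk split_r. Qed.

Lemma conjop_dsum (V W : lmodType C) n m (s1 : 'M[C]_n) (s2 : 'M[C]_m)
  (T1 : ('I_n -> V) -> ('I_n -> W)) (T2 : ('I_m -> V) -> ('I_m -> W)) :
  s1 \in unitmx -> s2 \in unitmx ->
  conjop (block_mx s1 0 0 s2) (dsum_op T1 T2) = dsum_op (conjop s1 T1) (conjop s2 T2).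
Proof.
move=> s1u s2u; apply: functional_extensionality => v.
rewrite /conjop invmx_block_diag ?block_diag_mx_unit ?s1u //.
rewrite [mxact (block_mx (invmx _) _ _ _) _]mxact_blk.
apply: functional_extensionality => i.
rewrite [RHS]/dsum_op; case: (split i) => a.
  by rewrite dsum_l blk_l.
by rewrite dsum_r blk_r.
Qed.

End Aux.
Section IP.
Variable R : realType.
Local Notation C := (R[i]).
Variable V : lmodType C.
Variable ip : V -> V -> C.
Hypothesis P : inner_product ip.

Let P1 : forall (a : C) (x y z : V), ip (a *: x + y) z = a * ip x z + ip y z.
Proof. by case: P. Qed.
Let P2 : forall x y, ip x y = conjc (ip y x).
Proof. by case: P. Qed.
Let P3 : forall x, 0 <= ip x x.
Proof. by case: P. Qed.

Lemma ip0l z : ip 0 z = 0.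
Proof.
have := P1 1 0 0 z; rewrite scaler0 addr0 mul1r => h.
by move/(congr1 (fun t => t - ip 0 z)): h; rewrite subrr addrK.
Qed.
Lemma ipDl x y z : ip (x + y) z = ip x z + ip y z.
Proof. by rewrite -[x]scale1r P1 mul1r scale1r. Qed.
Lemma ipZl a x z : ip (a *: x) z = a * ip x z.
Proof. by rewrite -[a *: x]addr0 P1 ip0l addr0. Qed.
Lemma ipNl x z : ip (- x) z = - ip x z.
Proof. by rewrite -scaleN1r ipZl mulN1r. Qed.
Lemma ipDr x y z : ip z (x + y) = ip z x + ip z y.
Proof. by rewrite P2 ipDl rmorphD (P2 z x) (P2 z y). Qed.
Lemma ipZr a x z : ip z (a *: x) = conjc a * ip z x.
Proof. by rewrite P2 ipZl rmorphM (P2 z x). Qed.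
Lemma ipNr x z : ip z (- x) = - ip z x.
Proof. by rewrite P2 ipNl rmorphN (P2 z x). Qed.

Lemma ip_para u v : ip (u + v) (u + v) <= 2%:R * (ip u u + ip v v).
Proof.
have E : ip (u + v) (u + v) + ip (u - v) (u - v) = 2%:R * (ip u u + ip v v).
  rewrite !ipDl !ipDr !ipNl !ipNr; ring.
by rewrite -E lerDl.
Qed.

Lemma ip_sum k (u : 'I_k -> V) :
  ip (\sum_(j < k) u j) (\sum_(j < k) u j) <= 2%:R ^+ k * \sum_(j < k) ip (u j) (u j).
Proof.
elim: k u => [|k IH] u.
  by rewrite !big_ord0 ip0l expr0 mul1r.
rewrite !big_ord_recl.
set a := u ord0; set S := \sum_(i < k) u (lift ord0 i).
set T := \sum_(i < k) ip (u (lift ord0 i)) (u (lift ord0 i)).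
have IHk : ip S S <= 2%:R ^+ k * T by exact: IH.
have h2 : (0 : C) <= 2%:R by rewrite ler0n.
have h1 : (1 : C) <= 2%:R ^+ k by apply: exprn_ege1; rewrite ler1n.
apply: (le_trans (ip_para a S)).
rewrite exprS -mulrA; apply: ler_wpM2l => //.
rewrite mulrDr; apply: lerD => //.
exact: ler_peMl.
Qed.

Lemma ipZZ a w : ip (a *: w) (a *: w) = a * conjc a * ip w w.
Proof. by rewrite ipZl ipZr mulrA. Qed.

Lemma mxact_bound n (A : 'M[C]_n) : exists c : C, 0 <= c /\
  forall w : 'I_n -> V, normsqn ip (mxact A w) <= c * normsqn ip w.
Proof.
set B := \sum_(p : 'I_n * 'I_n) A p.1 p.2 * conjc (A p.1 p.2).
have B0 : 0 <= B by apply: sumr_ge0 => p _; apply: mulcJ_ge0.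
have Bij : forall i j, A i j * conjc (A i j) <= B.
  move=> i j; rewrite /B (bigD1 (i, j)) //= lerDl.
  by apply: sumr_ge0 => p _; apply: mulcJ_ge0.
have h2 : (0 : C) <= 2%:R ^+ n by apply: exprn_ge0; rewrite ler0n.
exists (n%:R * (2%:R ^+ n * B)); split.
  by apply: mulr_ge0; [rewrite ler0n | apply: mulr_ge0].
move=> w; rewrite /normsqn /mxact.
apply: (le_trans (ler_sum _ (fun i _ => ip_sum (fun j => A i j *: w j)))).
have -> : n%:R * (2%:R ^+ n * B) * \sum_(i < n) ip (w i) (w i) =
   \sum_(i < n) (2%:R ^+ n * (\sum_(j < n) B * ip (w j) (w j))).
  rewrite sumr_const card_ord -mulr_natl -mulr_sumr; ring.
apply: ler_sum => i _; apply: ler_wpM2l => //; apply: ler_sum => j _.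
rewrite ipZZ; apply: ler_wpM2r => //.
Qed.

End IP.
Unset Implicit Arguments.
Section Main.
Variable R : realType.
Local Notation C := (R[i]).

Lemma bounded_conj (H K : lmodType C) (ipH : H -> H -> C) (ipK : K -> K -> C)
  (PH : inner_product ipH) (PK : inner_product ipK) n (s : 'M[C]_n) T :
  bounded_op ipH ipK T -> bounded_op ipH ipK (conjop s T).
Proof.
case=> Tlin [M [M0 TM]]; split.
  by move=> a v w; rewrite /conjop mxact_lin Tlin mxact_lin.
have [c1 [c10 h1]] := mxact_bound PK (invmx s).
have [c2 [c20 h2]] := mxact_bound PH s.
exists (c1 * (M * c2)); split; first by apply: mulr_ge0 => //; apply: mulr_ge0.
move=> v; rewrite /conjop; apply: (le_trans (h1 _)).
rewrite -mulrA; apply: ler_wpM2l => //.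
apply: (le_trans (TM _)); rewrite -mulrA; apply: ler_wpM2l => //.
Qed.

Variable d : nat.
Variable D : ncsubset R d.

Definition E : ncsubset R d := fun n x =>
  exists (s : 'M[C]_n) (y : ncpt R d n), [/\ s \in unitmx, D n y & x = simpt s y].

Lemma env_iff : is_ncset D -> forall n x, envelope D n x <-> E n x.
Proof.
move=> [Dds _] n x; split.
  apply; last by move=> m y Dy; exists 1%:M, y; rewrite unitmx1 simpt1.
    split.
      move=> n1 m1 x1 y1 [s1 [z1 [s1u Dz1 ->]]] [s2 [z2 [s2u Dz2 ->]]].
      exists (block_mx s1 0 0 s2), (dsum_pt z1 z2); split.
      - by rewrite block_diag_mx_unit s1u.
      - exact: Dds.
      - exact: dsum_simpt.
    move=> m U x1 Uu [s [z [su Dz ->]]].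
    have [Ui Uu'] := unitary_inv Uu.
    exists (s *m U), z; split => //; first by rewrite unitmx_mul su.
    by rewrite -simptM // /simpt Ui.
  move=> m S x1 Su [s [z [su Dz ->]]].
  exists (s *m S), z; split => //; first by rewrite unitmx_mul su.
  by rewrite simptM.
move=> [s [y [su Dy ->]]] B _ Binv BD; apply: Binv => //; exact: BD.
Qed.

Variables (H K : lmodType C) (ipH : H -> H -> C) (ipK : K -> K -> C).
Variable f : ncmap H K d.
Hypothesis fnc : is_ncfun ipH ipK D f.

Definition gdef : ncmap H K d := fun n x =>
  let p := epsilon (inhabits (1%:M, x))
    (fun p : 'M[C]_n * ncpt R d n => [/\ p.1 \in unitmx, D n p.2 & x = simpt p.1 p.2]) in
  conjop p.1 (f n p.2).

Lemma wd n (s1 s2 : 'M[C]_n) (y1 y2 : ncpt R d n) :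
  s1 \in unitmx -> s2 \in unitmx -> D n y1 -> D n y2 -> simpt s1 y1 = simpt s2 y2 ->
  conjop s1 (f n y1) = conjop s2 (f n y2).
Proof.
move=> s1u s2u D1 D2 e.
have ey2 : y2 = simpt (s1 *m invmx s2) y1.
  by rewrite -simptM ?unitmx_inv // e simptK.
have tu : s1 *m invmx s2 \in unitmx by rewrite unitmx_mul s1u unitmx_inv.
case: fnc => _ _ _ fsim.
have := fsim n _ y1 tu D1; rewrite -ey2 => /(_ D2) ->.
by rewrite -[conjop s2 _]/(conjop s2 (conjop (s1 *m invmx s2) (f n y1))) conjopM // mulmxKV.
Qed.

Lemma gE n s y x : s \in unitmx -> D n y -> x = simpt s y -> gdef n x = conjop s (f n y).
Proof.
move=> su Dy ex; rewrite /gdef.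
set Q := (fun p : 'M[C]_n * ncpt R d n => _).
have [|pu pD px] := epsilon_spec (inhabits (1%:M, x)) Q.
  by exists (s, y).
apply: wd => //; by rewrite -px.
Qed.

End Main.
Arguments env_iff {R d D} _ {n x}.
Arguments gE {R d D H K ipH ipK f} fnc {n s y x}.
Arguments bounded_conj {R H K ipH ipK} PH PK {n s T}.
Theorem proposition3p11 (R : realType)
  (H : lmodType R[i]) (ipH : H -> H -> R[i]) (K : lmodType R[i]) (ipK : K -> K -> R[i])
  (hH : is_hilbert ipH) (hK : is_hilbert ipK)
  (d : nat) (D : ncsubset R d) (f : ncmap H K d) :
  is_ncdomain D -> is_ncfun ipH ipK D f ->
  exists g : ncmap H K d,
    [/\ is_ncfun ipH ipK (envelope D) g,
        (forall n (x : ncpt R d n), D n x -> g n x = f n x) &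
        forall g' : ncmap H K d,
          is_ncfun ipH ipK (envelope D) g' ->
          (forall n (x : ncpt R d n), D n x -> g' n x = f n x) ->
          forall n (x : ncpt R d n), envelope D n x -> g' n x = g n x].
Proof.
move=> [Dnc _] fnc.
have env := env_iff Dnc.
have fnc' := fnc; case: fnc' => Dds fb fds fsim.
have inD : forall n (x : ncpt R d n), D n x -> envelope D n x.
  by move=> n x Dx; apply/env; exists 1%:M, x; rewrite unitmx1 simpt1.
exists (gdef R d D H K f); split.
- split.
  + move=> n m x y /env ex /env ey; apply/env.
    case: ex => [s1 [z1 [s1u Dz1 ->]]]; case: ey => [s2 [z2 [s2u Dz2 ->]]].
    exists (block_mx s1 0 0 s2), (dsum_pt z1 z2); split.
    * by rewrite block_diag_mx_unit s1u.
    * exact: Dds.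
    * exact: dsum_simpt.
  + move=> n x /env [s [y [su Dy ex]]].
    rewrite (gE fnc su Dy ex).
    apply: bounded_conj; [exact: hH.1 | exact: hK.1 | exact: fb].
  + move=> n m x y /env [s1 [z1 [s1u Dz1 ex]]] /env [s2 [z2 [s2u Dz2 ey]]].
    have bu : block_mx s1 0 0 s2 \in unitmx by rewrite block_diag_mx_unit s1u.
    rewrite (gE fnc bu (Dds _ _ _ _ Dz1 Dz2)); last by rewrite ex ey dsum_simpt.
    by rewrite (gE fnc s1u Dz1 ex) (gE fnc s2u Dz2 ey) fds // conjop_dsum.
  + move=> n s x su /env [t [y [tu Dy ex]]] _.
    rewrite (gE fnc tu Dy ex).
    have tsu : t *m s \in unitmx by rewrite unitmx_mul tu.
    rewrite (gE fnc (x := simpt s x) tsu Dy); last by rewrite ex simptM.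
    by rewrite -conjopM.
- move=> n x Dx; by rewrite (gE fnc (unitmx1 _ _) Dx (esym (simpt1 x))) conjop1.
- move=> g' [_ _ _ g'sim] g'f n x /[dup] ex' /env [s [y [su Dy ex]]].
  rewrite (gE fnc su Dy ex) -(g'f _ _ Dy).
  have := g'sim n s y su (inD _ _ Dy); rewrite -ex => /(_ ex') ->.
  by [].
Qed.
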